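(* Let $n\ge3$ and $1<\alpha\le\sqrt2$. Then the set of minimal vectors of $D_n^\alpha$ is $S(D_n^\alpha)=\{\pm\mathbf{b}_1,\dots,\pm\mathbf{b}_n\}$. In particular $\lambda_1^2(D_n^\alpha)=2$ and $D_n^\alpha$ is generic well-rounded.
   Context: Let $\mathbf{e}_1,\dots,\mathbf{e}_n$ be the standard basis of $\mathbb{R}^n$. For $n\ge3$, $1\le\alpha\le\sqrt2$ and $\overline\alpha:=\sqrt{2-\alpha^2}$, $D_n^\alpha$ is the lattice with basis $\mathbf{b}_1=\alpha\mathbf{e}_1+\overline\alpha\mathbf{e}_2$, $\mathbf{b}_2=\alpha\mathbf{e}_2+\overline\alpha\mathbf{e}_3$, $\mathbf{b}_3=\overline\alpha\mathbf{e}_1+\alpha\mathbf{e}_3$, $\mathbf{b}_4=\overline\alpha\mathbf{e}_3-\alpha\mathbf{e}_4$, and $\mathbf{b}_k=\overline\alpha\mathbf{e}_{k-1}-\alpha\mathbf{e}_k$ for $5\le k\le n$. $S(\Lambda)$ is the set of vectors of $\Lambda$ of norm $\lambda_1(\Lambda)=\min_{0\ne\mathbf{x}\in\Lambda}\|\mathbf{x}\|$. A lattice in $\mathbb{R}^n$ is generic well-rounded if $S(\Lambda)$ spans $\mathbb{R}^n$ and $|S(\Lambda)|=2n$. *)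

(* Defs.v *)
From HB Require Import structures.
From mathcomp Require Import all_boot all_order all_algebra.
From mathcomp Require Import all_classical all_reals.
Set Implicit Arguments. Unset Strict Implicit. Unset Printing Implicit Defensive.
Import Order.TTheory GRing.Theory Num.Theory.
Local Open Scope classical_set_scope.
Local Open Scope ring_scope.

Section Defs.
Variable R : realType.

Definition vnorm n (x : 'rV[R]_n) : R := Num.sqrt (\sum_(i < n) x 0 i ^+ 2).

(* Standard basis vector e_j, indexed from 0 (paper's e_{j+1}). *)
Definition std_e n (j : nat) : 'rV[R]_n := \row_(i < n) (if (i : nat) == j then 1 else 0).

Definition abar (a : R) : R := Num.sqrt (2 - a ^+ 2).

(* Basis of D_n^alpha; index k : 'I_n stands for the paper's b_{k+1}. *)
Definition Dbasis n (a : R) (k : 'I_n) : 'rV[R]_n :=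
  match (k : nat) with
  | 0 => a *: std_e n 0 + abar a *: std_e n 1
  | 1 => a *: std_e n 1 + abar a *: std_e n 2
  | 2 => abar a *: std_e n 0 + a *: std_e n 2
  | 3 => abar a *: std_e n 2 - a *: std_e n 3
  | k'.+1 => abar a *: std_e n k' - a *: std_e n k'.+1
  end.

Definition lattice_of n (b : 'I_n -> 'rV[R]_n) : set 'rV[R]_n :=
  [set x | exists c : 'I_n -> int, x = \sum_(i < n) (c i)%:~R *: b i].

Definition D_lattice n (a : R) : set 'rV[R]_n := lattice_of (@Dbasis n a).

Definition lambda1 n (L : set 'rV[R]_n) : R :=
  inf [set vnorm x | x in [set y | L y /\ y != 0]].

Definition min_vectors n (L : set 'rV[R]_n) : set 'rV[R]_n :=
  [set x | L x /\ x != 0 /\ vnorm x = lambda1 L].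

Definition generic_well_rounded n (L : set 'rV[R]_n) : Prop :=
  (forall v : 'rV[R]_n, exists (s : seq 'rV[R]_n) (c : 'rV[R]_n -> R),
      (forall x, x \in s -> min_vectors L x) /\ v = \sum_(x <- s) c x *: x)
  /\ (exists s : seq 'rV[R]_n, uniq s /\ size s = (2 * n)%N /\
        min_vectors L = [set x | x \in s]).

End Defs.
Arguments D_lattice {R} n a.
Arguments Dbasis {R} n a k.
Arguments std_e {R} n j.

(* Main.v *)
Require Import Defs.
From HB Require Import structures.
From mathcomp Require Import all_boot all_order all_algebra.
From mathcomp Require Import all_classical all_reals.
Import Order.TTheory GRing.Theory Num.Theory.
Local Open Scope classical_set_scope.
Local Open Scope ring_scope.
From mathcomp Require Import ring lra zify.
Set Implicit Arguments. Unset Strict Implicit.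
Definition cc {R : realType} n (c : 'I_n -> R) (k : nat) : R :=
  \sum_(i < n | (i:nat) == k) c i.
Definition sg {R : realType} (j : nat) : R := if (j < 3)%N then 1 else -1.
Definition f1 (j : nat) : nat :=
  match j with 0 => 2 | 1 => 0 | 2 => 1 | _ => j.+1 end.

Lemma coef (R : realType) n (a : R) (i j : 'I_n) :
  Dbasis n a i 0 j = a * (sg j * ((i:nat) == j)%:R)
    + abar a * (((i:nat) == f1 j)%:R + ((j:nat) == 2)%:R * ((i:nat) == 3)%:R).
Proof.
case: i => i Hi; case: j => j Hj; rewrite /Dbasis /std_e /sg /=.
rewrite ?(mxE, mxE). 
do 4?[case: i Hi => [|i] Hi]; do 4?[case: j Hj => [|j] Hj];
  rewrite ?mxE /= ?(mulr0, mulr1, addr0, add0r, mul0r, subr0, sub0r, oppr0, mulrN1) //.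
  by case: i {Hi}.
rewrite !eqSS [(j == i)%N]eq_sym [(j.+1 == i)%N]eq_sym.
case: (i == j)%N; case: (i == j.+1)%N; rewrite /=; ring.
Qed.

Definition Pc {R : realType} n (c : 'I_n -> R) j : R := sg j * cc c j.
Definition Qc {R : realType} n (c : 'I_n -> R) j : R :=
  cc c (f1 j) + (j == 2)%:R * cc c 3.
Definition Af {R : realType} n (c : 'I_n -> R) : R := \sum_(0 <= j < n) cc c j ^+ 2.
Definition Ef {R : realType} n (c : 'I_n -> R) : R :=
  \sum_(0 <= j < n) (Pc c j + Qc c j) ^+ 2.
Definition Ff {R : realType} n (c : 'I_n -> R) : R :=
  \sum_(0 <= j < n) Pc c j * (Pc c j + Qc c j).
Definition Tf {R : realType} n (c : 'I_n -> R) : R :=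
  \sum_(3 <= j < n) (cc c j.+1 - cc c j) ^+ 2.

Lemma sum_ind (R : realType) n (c : 'I_n -> R) k :
  \sum_(i < n) c i * ((i:nat) == k)%:R = cc c k.
Proof.
rewrite /cc [RHS]big_mkcond; apply: eq_bigr => i _.
by case: ((i:nat) == k); rewrite ?mulr1 ?mulr0.
Qed.

Lemma cc_out (R : realType) n (c : 'I_n -> R) k : (n <= k)%N -> cc c k = 0.
Proof.
move=> hk; rewrite /cc big1 // => i /eqP hi.
by move: (ltn_ord i); rewrite hi ltnNge hk.
Qed.

Lemma cc_ord (R : realType) n (c : 'I_n -> R) (i : 'I_n) : cc c i = c i.
Proof.
rewrite /cc (big_pred1 i) // => j /=; by rewrite -val_eqE.
Qed.

Lemma coord (R : realType) n (a : R) (c : 'I_n -> R) (j : 'I_n) :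
  (\sum_i c i *: Dbasis n a i) 0 j = a * Pc c j + abar a * Qc c j.
Proof.
rewrite summxE.
under eq_bigr => i _ do rewrite mxE coef.
transitivity (a * sg j * \sum_i c i * ((i:nat)==j)%:R
  + abar a * \sum_i c i * ((i:nat) == f1 j)%:R
  + abar a * ((j:nat)==2)%:R * \sum_i c i * ((i:nat)==3)%:R).
  rewrite !mulr_sumr -!big_split; apply: eq_bigr => i _ /=; ring.
rewrite !sum_ind /Pc /Qc; ring.
Qed.

Lemma sg2 (R : realType) j : (sg j : R) ^+ 2 = 1.
Proof. by rewrite /sg; case: ifP => _; rewrite ?expr1n ?sqrrN ?expr1n. Qed.

Lemma normsq (R : realType) n (a : R) (c : 'I_n -> R) :
  \sum_(j < n) ((\sum_i c i *: Dbasis n a i) 0 j) ^+ 2 =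
  (a - abar a) ^+ 2 * Af c + abar a ^+ 2 * Ef c + 2 * (a - abar a) * abar a * Ff c.
Proof.
under eq_bigr => j _ do rewrite coord.
rewrite -(big_mkord xpredT (fun j => (a * Pc c j + abar a * Qc c j) ^+ 2)).
rewrite /Af /Ef /Ff !mulr_sumr -!big_split; apply: eq_bigr => j _ /=.
have -> : cc c j ^+ 2 = Pc c j ^+ 2 by rewrite /Pc exprMn sg2 mul1r.
ring.
Qed.

Lemma tailPQ (R : realType) n (c : 'I_n -> R) j : (3 <= j)%N ->
  Pc c j = - cc c j /\ Qc c j = cc c j.+1.
Proof.
case: j => [|[|[|j]]] // _.
by rewrite /Pc /Qc /sg /= mulN1r mul0r addr0.
Qed.

Lemma tel (R : realType) n (c : 'I_n -> R) : (3 <= n)%N ->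
  \sum_(3 <= j < n) (cc c j.+1 ^+ 2 - cc c j ^+ 2) = - cc c 3 ^+ 2.
Proof.
move=> hn; rewrite (telescope_sumr (fun j => cc c j ^+ 2)) //.
by rewrite cc_out // expr0n /= sub0r.
Qed.

Lemma E_expl (R : realType) n (c : 'I_n -> R) : (3 <= n)%N ->
  Ef c = (cc c 0 + cc c 2) ^+ 2 + (cc c 1 + cc c 0) ^+ 2
         + (cc c 2 + cc c 1 + cc c 3) ^+ 2 + Tf c.
Proof.
move=> hn; rewrite /Ef big_ltn; last by lia.
rewrite big_ltn; last by lia.
rewrite big_ltn; last by lia.
rewrite /Tf (@eq_big_nat _ _ _ 3 n _ (fun j => (cc c j.+1 - cc c j) ^+ 2)); last first.
  move=> j /andP [hj _]; have [-> ->] := tailPQ c hj; congr (_ ^+ 2); ring.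
rewrite /Pc /Qc /sg /= !mul1r !mul0r !addr0; ring.
Qed.

Lemma F_expl (R : realType) n (c : 'I_n -> R) : (3 <= n)%N ->
  2 * Ff c = (cc c 0 + cc c 1 + cc c 2) ^+ 2 + cc c 0 ^+ 2 + cc c 1 ^+ 2
         + (cc c 2 + cc c 3) ^+ 2 + Tf c.
Proof.
move=> hn; rewrite /Ff big_ltn; last by lia.
rewrite big_ltn; last by lia.
rewrite big_ltn; last by lia.
have ht : Tf c = 2 * \sum_(3 <= j < n) (Pc c j * (Pc c j + Qc c j)) - cc c 3 ^+ 2.
  rewrite -(tel c hn) mulr_sumr -big_split /Tf; apply: eq_big_nat => j /andP [hj _].
  have [-> ->] := tailPQ c hj; rewrite /=; ring.
rewrite ht /Pc /Qc /sg /= !mul1r !mul0r !addr0; ring.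
Qed.

Definition Gf {R : realType} n (c : 'I_n -> R) : R :=
  cc c 0 ^+ 2 + cc c 1 ^+ 2 + cc c 2 ^+ 2 + cc c 3 ^+ 2 + cc c 0 * cc c 1
  + cc c 0 * cc c 2 + cc c 1 * cc c 2 + cc c 1 * cc c 3 + cc c 2 * cc c 3
  + \sum_(3 <= j < n) (cc c j.+1 ^+ 2 - cc c j * cc c j.+1).

Lemma G_expl (R : realType) n (c : 'I_n -> R) : (3 <= n)%N -> Ef c = 2 * Gf c.
Proof.
move=> hn; rewrite E_expl //.
have ht : Tf c = 2 * \sum_(3 <= j < n) (cc c j.+1 ^+ 2 - cc c j * cc c j.+1) + cc c 3 ^+ 2.
  rewrite -[cc c 3 ^+ 2]opprK -(tel c hn) mulr_sumr -sumrB /Tf; apply: eq_big_nat => j _.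
  ring.
rewrite ht /Gf; ring.
Qed.

Lemma T_ge0 (R : realType) n (c : 'I_n -> R) : 0 <= Tf c.
Proof. by apply: sumr_ge0 => j _; apply: sqr_ge0. Qed.

Lemma T_zero (R : realType) n (c : 'I_n -> R) : (3 <= n)%N -> Tf c = 0 ->
  forall k, (3 <= k)%N -> cc c k = 0.
Proof.
move=> hn hT.
have term : forall j, (3 <= j < n)%N -> cc c j.+1 = cc c j.
  move=> j hj; apply/eqP; rewrite -subr_eq0 -sqrf_eq0; apply/eqP.
  move: hT; rewrite /Tf (bigD1_seq j) ?mem_index_iota ?iota_uniq //=.
  have h0 : 0 <= \sum_(i <- index_iota 3 n | i != j) (cc c i.+1 - cc c i) ^+ 2.
    by apply: sumr_ge0 => i _; apply: sqr_ge0.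
  have := sqr_ge0 (cc c j.+1 - cc c j); lra.
suff H : forall t, (t <= n - 3)%N -> cc c (n - t) = 0.
  move=> k hk; case: (leqP n k) => hnk; first by rewrite cc_out.
  have -> : k = (n - (n - k))%N by lia.
  apply: H; lia.
elim=> [|t IH] ht; first by rewrite subn0 cc_out.
rewrite -term; last by lia.
have -> : (n - t.+1).+1 = (n - t)%N by lia.
apply: IH; lia.
Qed.

Lemma c_zero (R : realType) n (c : 'I_n -> R) :
  (forall k, cc c k = 0) -> forall i, c i = 0.
Proof. by move=> h i; rewrite -cc_ord h. Qed.

Lemma cc_all_zero (R : realType) n (c : 'I_n -> R) : (3 <= n)%N -> Tf c = 0 ->
  cc c 0 = 0 -> cc c 1 = 0 -> cc c 2 = 0 -> forall i, c i = 0.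
Proof.
move=> hn hT h0 h1 h2; apply: c_zero => -[|[|[|k]]] //.
by apply: (T_zero hn hT).
Qed.

Lemma sq0 (R : realType) (x : R) : x ^+ 2 = 0 -> x = 0.
Proof. by move/eqP; rewrite sqrf_eq0 => /eqP. Qed.

Lemma E_pos (R : realType) n (c : 'I_n -> R) : (3 <= n)%N ->
  (exists i, c i != 0) -> 0 < Ef c.
Proof.
move=> hn [i hi]; rewrite E_expl //.
have := T_ge0 c.
have := sqr_ge0 (cc c 0 + cc c 2); have := sqr_ge0 (cc c 1 + cc c 0).
have := sqr_ge0 (cc c 2 + cc c 1 + cc c 3).
set A := _ ^+ 2; set B := _ ^+ 2; set C := _ ^+ 2; set T := Tf c.
move=> hA hB hC hT.
rewrite lt_neqAle; apply/andP; split; last by lra.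
apply/eqP => h.
have eA : A = 0 by lra. have eB : B = 0 by lra. have eC : C = 0 by lra.
have eT : T = 0 by lra.
move: (sq0 eA) (sq0 eB) (sq0 eC) => {hA hB hC eA eB eC} hA hB hC.
have h3 : cc c 3 = 0 by apply: (T_zero hn eT).
move: hi; rewrite (cc_all_zero hn eT) ?eqxx //; lra.
Qed.

Lemma F_pos (R : realType) n (c : 'I_n -> R) : (3 <= n)%N ->
  (exists i, c i != 0) -> 0 < Ff c.
Proof.
move=> hn [i hi].
suff : 0 < 2 * Ff c by lra.
rewrite F_expl //.
have := T_ge0 c.
have := sqr_ge0 (cc c 0 + cc c 1 + cc c 2); have := sqr_ge0 (cc c 0).
have := sqr_ge0 (cc c 1); have := sqr_ge0 (cc c 2 + cc c 3).
set A := (cc c 0 + _ + _) ^+ 2; set B := cc c 0 ^+ 2; set C := cc c 1 ^+ 2.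
set D := (cc c 2 + _) ^+ 2; set T := Tf c.
move=> hD hC hB hA hT.
rewrite lt_neqAle; apply/andP; split; last by lra.
apply/eqP => h.
have eA : A = 0 by lra. have eB : B = 0 by lra. have eC : C = 0 by lra.
have eD : D = 0 by lra. have eT : T = 0 by lra.
move: (sq0 eA) (sq0 eB) (sq0 eC) (sq0 eD) => {hA hB hC hD eA eB eC eD} hA hB hC hD.
have h3 : cc c 3 = 0 by apply: (T_zero hn eT).
move: hi; rewrite (cc_all_zero hn eT) ?eqxx //; lra.
Qed.

Lemma A_ord (R : realType) n (c : 'I_n -> R) : Af c = \sum_(i < n) c i ^+ 2.
Proof. by rewrite /Af big_mkord; apply: eq_bigr => i _; rewrite cc_ord. Qed.

Lemma E_ge0 (R : realType) n (c : 'I_n -> R) : 0 <= Ef c.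
Proof. by apply: sumr_ge0 => j _; apply: sqr_ge0. Qed.

Lemma F_ge0 (R : realType) n (c : 'I_n -> R) : (3 <= n)%N -> 0 <= Ff c.
Proof.
move=> hn; suff : 0 <= 2 * Ff c by lra.
rewrite F_expl //; have := T_ge0 c.
have := sqr_ge0 (cc c 0 + cc c 1 + cc c 2); have := sqr_ge0 (cc c 0).
have := sqr_ge0 (cc c 1); have := sqr_ge0 (cc c 2 + cc c 3); lra.
Qed.

Definition isint {R : realType} n (c : 'I_n -> R) := forall i, c i \is a Num.int.

Lemma cc_int (R : realType) n (c : 'I_n -> R) k : isint c -> cc c k \is a Num.int.
Proof. by move=> h; apply: rpred_sum => i _; apply: h. Qed.

Lemma sg_int (R : realType) j : (sg j : R) \is a Num.int.
Proof. by rewrite /sg; case: ifP => _; rewrite ?rpredN rpred1. Qed.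

Lemma F_int (R : realType) n (c : 'I_n -> R) : isint c -> Ff c \is a Num.int.
Proof.
move=> h; apply: rpred_sum => j _; rewrite /Pc /Qc.
by rewrite !(rpredM, rpredD, sg_int, cc_int, rpred_nat).
Qed.

Lemma G_int (R : realType) n (c : 'I_n -> R) : isint c -> Gf c \is a Num.int.
Proof.
move=> h; rewrite /Gf !(rpredM, rpredD, rpredX, cc_int) //.
by apply: rpred_sum => j _; rewrite !(rpredM, rpredB, rpredX, cc_int).
Qed.

Lemma int_ge1 (R : realType) (x : R) : x \is a Num.int -> 0 < x -> 1 <= x.
Proof.
move=> /intrP [m ->]; rewrite ltr0z ler1z; lia.
Qed.

Definition Vc {R : realType} n (a : R) (c : 'I_n -> R) : 'rV[R]_n :=
  \sum_i c i *: Dbasis n a i.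

Definition Qf {R : realType} n (a : R) (c : 'I_n -> R) : R :=
  \sum_(j < n) (Vc a c 0 j) ^+ 2.

Lemma afacts (R : realType) (a : R) : 1 < a -> a <= Num.sqrt 2 ->
  [/\ abar a ^+ 2 = 2 - a ^+ 2, 0 <= abar a, abar a < a & a ^+ 2 <= 2].
Proof.
move=> h1 h2.
have hq := sqr_sqrtr (ler0n R 2); have hq0 := sqrtr_ge0 (2%:R : R).
have ha2 : a ^+ 2 <= 2 by nra.
have hs : abar a ^+ 2 = 2 - a ^+ 2 by rewrite /abar sqr_sqrtr // subr_ge0.
have hs0 : 0 <= abar a by apply: sqrtr_ge0.
split=> //; nra.
Qed.

Lemma Q_decomp (R : realType) n (a : R) (c : 'I_n -> R) :
  Qf a c = (a - abar a) ^+ 2 * Af c + abar a ^+ 2 * Ef c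
           + 2 * (a - abar a) * abar a * Ff c.
Proof. exact: normsq. Qed.

Lemma A_int (R : realType) n (c : 'I_n -> R) : isint c -> Af c \is a Num.int.
Proof. by move=> h; rewrite A_ord; apply: rpred_sum => i _; rewrite rpredX. Qed.

Lemma A_pos (R : realType) n (c : 'I_n -> R) : (exists i, c i != 0) -> 0 < Af c.
Proof.
move=> [i hi]; rewrite A_ord (bigD1 i) //=.
have : 0 <= \sum_(j < n | j != i) c j ^+ 2 by apply: sumr_ge0 => j _; apply: sqr_ge0.
have : 0 < c i ^+ 2 by rewrite exprn_even_gt0 //.
lra.
Qed.

Lemma Q_ge2 (R : realType) n (a : R) (c : 'I_n -> R) : (3 <= n)%N ->
  1 < a -> a <= Num.sqrt 2 -> isint c -> (exists i, c i != 0) ->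
  2 <= Qf a c /\ (Qf a c = 2 -> Af c = 1).
Proof.
move=> hn h1 h2 hi hc.
have [hs hs0 hsa ha2] := afacts h1 h2.
have hA := int_ge1 (A_int hi) (A_pos hc).
have hF := int_ge1 (F_int hi) (F_pos hn hc).
have hG : 1 <= Gf c.
  apply: int_ge1; first exact: G_int.
  have := E_pos hn hc; rewrite G_expl //; lra.
have hE : 2 <= Ef c by rewrite G_expl //; lra.
have key : Qf a c - 2 = (a - abar a) ^+ 2 * (Af c - 1) + abar a ^+ 2 * (Ef c - 2)
    + 2 * (a - abar a) * abar a * (Ff c - 1).
  apply/eqP; rewrite -subr_eq0; apply/eqP.
  transitivity (abar a ^+ 2 - (2 - a ^+ 2)); first by rewrite Q_decomp; ring.
  by rewrite hs subrr.
move: key; set d := a - abar a; set s := abar a => key.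
have hd : 0 < d by rewrite /d; lra.
have t1 : 0 <= d ^+ 2 * (Af c - 1) by apply: mulr_ge0; [apply: sqr_ge0|lra].
have t2 : 0 <= s ^+ 2 * (Ef c - 2) by apply: mulr_ge0; [apply: sqr_ge0|lra].
have t3 : 0 <= 2 * d * s * (Ff c - 1).
  apply: mulr_ge0; last lra. apply: mulr_ge0 => //; lra.
split; first lra.
move=> hQ.
have h0 : d ^+ 2 * (Af c - 1) = 0 by lra.
have hd2 : d ^+ 2 != 0 by rewrite sqrf_eq0 gt_eqF.
move/eqP: h0; rewrite mulf_eq0 (negbTE hd2) /= subr_eq0 => /eqP //.
Qed.

Lemma indep (R : realType) n (a : R) (c : 'I_n -> R) : (3 <= n)%N ->
  1 < a -> a <= Num.sqrt 2 -> Vc a c = 0 -> forall i, c i = 0.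
Proof.
move=> hn h1 h2 hV.
have [hs hs0 hsa ha2] := afacts h1 h2.
have hQ : Qf a c = 0 by rewrite /Qf hV; apply: big1 => j _; rewrite mxE expr0n.
move: hQ; rewrite Q_decomp.
have hE := E_ge0 c; have hF := F_ge0 c hn.
set d := a - abar a; set s := abar a.
have hd : 0 < d by rewrite /d; lra.
have t2 : 0 <= s ^+ 2 * Ef c by apply: mulr_ge0; [apply: sqr_ge0|lra].
have t3 : 0 <= 2 * d * s * Ff c.
  apply: mulr_ge0; last lra. apply: mulr_ge0 => //; lra.
have hA : 0 <= Af c by rewrite A_ord; apply: sumr_ge0 => j _; apply: sqr_ge0.
have t1 : 0 <= d ^+ 2 * Af c by apply: mulr_ge0; [apply: sqr_ge0|lra].
move=> hQ.
have h0 : d ^+ 2 * Af c = 0 by lra.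
have hd2 : d ^+ 2 != 0 by rewrite sqrf_eq0 gt_eqF.
move/eqP: h0; rewrite mulf_eq0 (negbTE hd2) /= A_ord => /eqP h0 i.
apply: sq0; apply: (psumr_eq0P _ h0) => // j _; apply: sqr_ge0.
Qed.

Lemma unit_c (R : realType) n (c : 'I_n -> R) : isint c -> Af c = 1 ->
  exists k, (c k = 1 \/ c k = -1) /\ forall i, i != k -> c i = 0.
Proof.
move=> hi hA.
have [k hk] : exists k, c k != 0.
  apply/existsP; apply: contraT; rewrite negb_exists => /forallP h.
  move: hA; rewrite A_ord big1 => [|i _]; last by move/negPn: (h i) => /eqP ->; rewrite expr0n.
  move/eqP; rewrite eq_sym oner_eq0 //.
move: hA; rewrite A_ord (bigD1 k) //= => hA.
have hr : 0 <= \sum_(j < n | j != k) c j ^+ 2 by apply: sumr_ge0 => j _; apply: sqr_ge0.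
have hk1 : 1 <= c k ^+ 2.
  by apply: int_ge1; [rewrite rpredX | rewrite exprn_even_gt0].
have hk2 : c k ^+ 2 = 1 by lra.
have hr0 : \sum_(j < n | j != k) c j ^+ 2 = 0 by lra.
exists k; split.
  by move/eqP: hk2; rewrite sqrf_eq1 => /orP [/eqP -> | /eqP ->]; [left|right].
move=> i hik; apply: sq0; apply: (psumr_eq0P _ hr0) => // j _; apply: sqr_ge0.
Qed.

Lemma sum_one (R : realType) n (w : R) p : (p < n)%N ->
  \sum_(j < n) w * ((j:nat) == p)%:R = w.
Proof.
move=> hp; rewrite (sum_ind (fun _ : 'I_n => w)).
by rewrite -[p]/(nat_of_ord (Ordinal hp)) cc_ord.
Qed.

Lemma pair_norm (R : realType) n (u v : R) p q : p != q -> (p < n)%N -> (q < n)%N ->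
  \sum_(j < n) ((u *: std_e n p + v *: std_e n q) 0 j) ^+ 2 = u ^+ 2 + v ^+ 2.
Proof.
move=> hpq hp hq.
transitivity (\sum_(j < n) (u ^+ 2 * ((j:nat) == p)%:R + v ^+ 2 * ((j:nat) == q)%:R)).
  apply: eq_bigr => j _; rewrite !mxE.
  case: (eqVneq (j:nat) p) => [hjp|hjp]; case: (eqVneq (j:nat) q) => [hjq|hjq] //=;
    rewrite ?mulr1 ?mulr0 ?addr0 ?add0r //.
  by move: hpq; rewrite -hjp -hjq eqxx.
  by rewrite expr0n.
by rewrite big_split /= !sum_one.
Qed.

Lemma dnorm (R : realType) n (a : R) (k : 'I_n) : (3 <= n)%N ->
  \sum_(j < n) (Dbasis n a k 0 j) ^+ 2 = a ^+ 2 + abar a ^+ 2.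
Proof.
move=> hn; case: k => k hk; rewrite /Dbasis /=.
case: k hk => [|[|[|[|k]]]] hk /=; rewrite -?scaleNr.
all: try (rewrite pair_norm; [| lia | lia | lia]).
all: rewrite ?sqrrN; ring.
Qed.

Lemma vnorm_basis (R : realType) n (a : R) (k : 'I_n) : (3 <= n)%N ->
  1 < a -> a <= Num.sqrt 2 -> vnorm (Dbasis n a k) = Num.sqrt 2.
Proof.
move=> hn h1 h2; have [hs _ _ _] := afacts h1 h2.
rewrite /vnorm dnorm // hs; congr Num.sqrt; ring.
Qed.

Lemma Vc_unit (R : realType) n (a : R) (c : 'I_n -> R) k (e : R) :
  c k = e -> (forall i, i != k -> c i = 0) -> Vc a c = e *: Dbasis n a k.
Proof.
move=> hk hi; rewrite /Vc (bigD1 k) //= hk big1 ?addr0 // => i hik.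
by rewrite hi // scale0r.
Qed.

Lemma Vc_delta (R : realType) n (a : R) k :
  Vc a (fun i : 'I_n => ((i == k)%:R : R)) = Dbasis n a k.
Proof.
by rewrite (@Vc_unit _ _ _ _ k 1) ?scale1r ?eqxx // => i /negbTE ->.
Qed.

Lemma Vc_intE (R : realType) n (a : R) (c : 'I_n -> int) :
  \sum_(i < n) (c i)%:~R *: Dbasis n a i = Vc a (fun i => (c i)%:~R).
Proof. by []. Qed.

Lemma vnorm_Vc (R : realType) n (a : R) (c : 'I_n -> R) :
  vnorm (Vc a c) = Num.sqrt (Qf a c).
Proof. by []. Qed.

Lemma Qf_ge0 (R : realType) n (a : R) (c : 'I_n -> R) : 0 <= Qf a c.
Proof. by apply: sumr_ge0 => j _; apply: sqr_ge0. Qed.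

Lemma nz_coef (R : realType) n (a : R) (c : 'I_n -> R) :
  Vc a c != 0 -> exists i, c i != 0.
Proof.
move=> h; apply/existsP; apply: contraT; rewrite negb_exists => /forallP H.
move: h; rewrite /Vc big1 ?eqxx // => i _.
by move/negPn: (H i) => /eqP ->; rewrite scale0r.
Qed.

Lemma basis_nz (R : realType) n (a : R) (k : 'I_n) : (3 <= n)%N ->
  1 < a -> a <= Num.sqrt 2 -> Dbasis n a k != 0.
Proof.
move=> hn h1 h2; apply/eqP => h.
have := @indep _ _ a (fun i : 'I_n => ((i == k)%:R : R)) hn h1 h2.
by rewrite Vc_delta h => /(_ erefl k); rewrite eqxx; move/eqP; rewrite oner_eq0.
Qed.

Lemma lat_lb (R : realType) n (a : R) x : (3 <= n)%N ->
  1 < a -> a <= Num.sqrt 2 -> D_lattice n a x -> x != 0 ->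
  Num.sqrt 2 <= vnorm x /\ (vnorm x = Num.sqrt 2 ->
     exists k, x = Dbasis n a k \/ x = - Dbasis n a k).
Proof.
move=> hn h1 h2 [c ->] hx.
rewrite Vc_intE in hx *.
set cr := fun i => (c i)%:~R : R.
have hi : isint cr by move=> i; apply: intr_int.
have [hQ hA] := Q_ge2 hn h1 h2 hi (nz_coef hx).
rewrite vnorm_Vc; split; first by rewrite ler_sqrt // (le_trans _ hQ).
move=> hq.
have hQ2 : Qf a cr = 2.
  by rewrite -(sqr_sqrtr (Qf_ge0 a cr)) hq sqr_sqrtr.
have [k [hk hz]] := unit_c hi (hA hQ2).
exists k; case: hk => hk.
  by left; rewrite (Vc_unit a hk hz) scale1r.
by right; rewrite (Vc_unit a hk hz) scaleN1r.
Qed.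

Lemma lat_basis (R : realType) n (a : R) k : D_lattice n a (Dbasis n a k).
Proof.
exists (fun i => (i == k)%:Z).
rewrite Vc_intE -{1}(Vc_delta a k); congr Vc; apply: funext => i.
Qed.

Lemma lat_basisN (R : realType) n (a : R) k : D_lattice n a (- Dbasis n a k).
Proof.
exists (fun i => - (i == k)%:Z).
rewrite Vc_intE (@Vc_unit _ _ _ _ k (-1)) ?scaleN1r //.
  by rewrite eqxx.
by move=> i /negbTE ->; rewrite oppr0.
Qed.

Lemma Vc_add (R : realType) n (a : R) (f g : 'I_n -> R) :
  Vc a (fun i => f i + g i) = Vc a f + Vc a g.
Proof. by rewrite /Vc -big_split; apply: eq_bigr => i _; rewrite scalerDl. Qed.

Lemma Vc_opp (R : realType) n (a : R) (f : 'I_n -> R) :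
  Vc a (fun i => - f i) = - Vc a f.
Proof. by rewrite /Vc -sumrN; apply: eq_bigr => i _; rewrite scaleNr. Qed.

Lemma basis_inj (R : realType) n (a : R) : (3 <= n)%N ->
  1 < a -> a <= Num.sqrt 2 -> injective (Dbasis n a).
Proof.
move=> hn h1 h2 i j hij; apply/eqP; apply: contraT => hne.
set c := fun l : 'I_n => ((l == i)%:R : R) + - ((l == j)%:R).
have hV : Vc a c = 0 by rewrite /c Vc_add Vc_opp !Vc_delta hij subrr.
have := indep hn h1 h2 hV i; rewrite /c eqxx (negbTE hne) oppr0 addr0.
by move/eqP; rewrite oner_eq0.
Qed.

Lemma basis_neg (R : realType) n (a : R) i j : (3 <= n)%N ->
  1 < a -> a <= Num.sqrt 2 -> Dbasis n a i != - Dbasis n a j.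
Proof.
move=> hn h1 h2; apply/eqP => hij.
set c := fun l : 'I_n => ((l == i)%:R : R) + ((l == j)%:R).
have hV : Vc a c = 0 by rewrite /c Vc_add !Vc_delta hij addNr.
have := indep hn h1 h2 hV i; rewrite /c eqxx.
case: (i == j) => /=; lra.
Qed.

Lemma vnormN (R : realType) n (x : 'rV[R]_n) : vnorm (- x) = vnorm x.
Proof. by rewrite /vnorm; congr Num.sqrt; apply: eq_bigr => j _; rewrite mxE sqrrN. Qed.

Unset Implicit Arguments.
Theorem mainTheorem15 (R : realType) (n : nat) (a : R)
  (hn : (3 <= n)%N) (ha1 : 1 < a) (ha2 : a <= Num.sqrt 2) :
  min_vectors (D_lattice n a) =
    [set x | exists k : 'I_n, x = Dbasis n a k \/ x = - Dbasis n a k]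
  /\ lambda1 (D_lattice n a) ^+ 2 = 2
  /\ generic_well_rounded (D_lattice n a).
Proof.
have hlam : lambda1 (D_lattice n a) = Num.sqrt 2.
  rewrite /lambda1.
  set S := [set vnorm x | x in _].
  have hn0 : (0 < n)%N by lia.
  have hS : S (Num.sqrt 2).
    exists (Dbasis n a (Ordinal hn0)); last exact: vnorm_basis.
    by split; [exact: lat_basis | exact: basis_nz].
  have hlb : lbound S (Num.sqrt 2).
    by move=> y [x [hxL hx0] <-]; case: (lat_lb hn ha1 ha2 hxL hx0).
  apply/eqP; rewrite eq_le; apply/andP; split.
    by apply: (ge_inf _ hS); exists (Num.sqrt 2).
  by apply: lb_le_inf => //; exists (Num.sqrt 2).
have hmin : min_vectors (D_lattice n a) =
    [set x | exists k : 'I_n, x = Dbasis n a k \/ x = - Dbasis n a k].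
  apply/seteqP; split => x.
    move=> [hL [hx0 hv]]; rewrite hlam in hv.
    exact: (lat_lb hn ha1 ha2 hL hx0).2 hv.
  move=> [k [->|->]]; rewrite /min_vectors /= hlam.
    by split; [exact: lat_basis | split; [exact: basis_nz | exact: vnorm_basis]].
  split; first exact: lat_basisN.
  by split; [rewrite oppr_eq0; exact: basis_nz | rewrite vnormN; exact: vnorm_basis].
split; first exact: hmin.
split; first by rewrite hlam sqr_sqrtr.
have hinj := basis_inj hn ha1 ha2.
split.
  move=> v.
  set B : 'M[R]_n := \matrix_i Dbasis n a i.
  have hBV : forall w : 'rV[R]_n, w *m B = Vc a (fun i => w 0 i).
    by move=> w; rewrite mulmx_sum_row /Vc; apply: eq_bigr => i _; rewrite rowK.
  have hfree : row_free B.
    apply: inj_row_free => w; rewrite hBV => hw.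
    apply/rowP => j; rewrite mxE; exact: (indep hn ha1 ha2 hw).
  have hU : B \in unitmx by rewrite -row_free_unit.
  set c := v *m invmx B.
  exists [seq Dbasis n a i | i <- enum 'I_n].
  exists (fun x => \sum_(i | Dbasis n a i == x) c 0 i).
  split.
    move=> x /mapP [i _ ->]; rewrite hmin; exists i; by left.
  rewrite big_map big_enum /=.
  transitivity (c *m B); first by rewrite /c mulmxKV.
  rewrite hBV /Vc; apply: eq_big => [i|i _] //.
  by rewrite (big_pred1 i) // => j /=; rewrite (inj_eq hinj).
set s1 := [seq Dbasis n a i | i <- enum 'I_n].
set s2 := [seq - Dbasis n a i | i <- enum 'I_n].
exists (s1 ++ s2); split; last split.
- rewrite cat_uniq; apply/and3P; split.
  + by rewrite map_inj_uniq // enum_uniq.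
  + apply/hasPn => x /mapP [j _ ->]; apply/mapP => -[i _ hij].
    by move/eqP: (basis_neg i j hn ha1 ha2); rewrite hij.
  + rewrite map_inj_uniq ?enum_uniq // => i j /eqP; rewrite eqr_opp => /eqP.
    exact: hinj.
- by rewrite size_cat !size_map -enumT size_enum_ord; lia.
rewrite hmin; apply/seteqP; split => x /=.
  move=> [k [->|->]]; rewrite mem_cat; apply/orP; [left|right];
    by apply/mapP; exists k; rewrite ?mem_enum.
rewrite mem_cat => /orP [] /mapP [k _ ->]; exists k; by [left|right].
Qed.
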